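(* Let $S$ be a compact metric space and $h:\mathbb{R}^d\times S\to\mathbb{R}^d$ a jointly continuous map for which there is $L>0$ with $\lVert h(x_1,y)-h(x_2,y)\rVert\le L\lVert x_1-x_2\rVert$ for all $x_1,x_2\in\mathbb{R}^d$, $y\in S$. For $c\ge1$ let $h_c(x,y):=h(cx,y)/c$; let $h_\infty(x,y)$ be the set of all $u\in\mathbb{R}^d$ with $\liminf_{c\to\infty}\lVert h_c(x,y)-u\rVert=0$; and let $H(x):=\overline{co}\big(\bigcup_{y\in S}h_\infty(x,y)\big)$ (closed convex hull). Assume (S1): whenever $c_n\uparrow\infty$, $y_n\to y$ in $S$, $x\in\mathbb{R}^d$ and $\lim_{n}h_{c_n}(x,y_n)=u$, then $u\in h_\infty(x,y)$. Then $H$ is a Marchaud map.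
   Context: A set-valued map $F:\mathbb{R}^n\to\{\text{subsets of }\mathbb{R}^m\}$ is a Marchaud map if (i) $F(x)$ is convex and compact for each $x$; (ii) there is $K>0$ with $\sup_{w\in F(x)}\lVert w\rVert<K(1+\lVert x\rVert)$ for all $x$; (iii) $F$ is upper-semicontinuous, i.e. its graph $\{(x,y):y\in F(x)\}$ is closed in $\mathbb{R}^n\times\mathbb{R}^m$. *)

(* Defs.v *)
From HB Require Import structures.
From mathcomp Require Import all_boot all_order all_algebra.
From mathcomp Require Import all_classical all_reals all_analysis.
Set Implicit Arguments. Unset Strict Implicit. Unset Printing Implicit Defensive.
Import Order.TTheory GRing.Theory Num.Theory.
Import numFieldNormedType.Exports.
Local Open Scope classical_set_scope.
Local Open Scope ring_scope.

Definition convex_rV {R : realType} {d : nat} (A : set 'rV[R]_d) : Prop :=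
  forall x y (t : R), A x -> A y -> 0 <= t -> t <= 1 -> A (t *: x + (1 - t) *: y).

Definition closed_convex_hull {R : realType} {d : nat} (A : set 'rV[R]_d)
  : set 'rV[R]_d :=
  \bigcap_(B in [set B : set 'rV[R]_d | closed B /\ convex_rV B /\ A `<=` B]) B.

Definition hscale {R : realType} {d : nat} {S : Type}
  (h : 'rV[R]_d -> S -> 'rV[R]_d) (c : R) (x : 'rV[R]_d) (y : S) : 'rV[R]_d :=
  c^-1 *: h (c *: x) y.

(* h_oo(x,y) := { u | liminf_{c -> oo} || h_c(x,y) - u || = 0 };
   since the quantity is >= 0, liminf = 0 unfolds to: for all eps > 0 and
   every threshold M, some c >= M (with c >= 1) has || h_c(x,y) - u || < eps. *)
Definition h_infty {R : realType} {d : nat} {S : Type}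
  (h : 'rV[R]_d -> S -> 'rV[R]_d) (x : 'rV[R]_d) (y : S) : set 'rV[R]_d :=
  [set u | forall (eps M : R), 0 < eps ->
     exists c : R, 1 <= c /\ M <= c /\ `|hscale h c x y - u| < eps].

Definition Hmap {R : realType} {d : nat} {S : Type}
  (h : 'rV[R]_d -> S -> 'rV[R]_d) (x : 'rV[R]_d) : set 'rV[R]_d :=
  closed_convex_hull (\bigcup_(y in [set: S]) h_infty h x y).

Definition Marchaud {R : realType} {n m : nat} (F : 'rV[R]_n -> set 'rV[R]_m) : Prop :=
  [/\ (forall x, convex_rV (F x) /\ compact (F x)),
      (exists K : R, 0 < K /\ forall x,
          (ereal_sup [set (`|w|)%:E | w in F x] < (K * (1 + `|x|))%:E)%E) &
      closed [set p : 'rV[R]_n * 'rV[R]_m | F p.1 p.2]].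

(* Main.v *)
Require Import Defs.
From HB Require Import structures.
From mathcomp Require Import all_boot all_order all_algebra.
From mathcomp Require Import all_classical all_reals all_analysis.
From mathcomp Require Import ring lra.
Import Order.TTheory GRing.Theory Num.Theory.
Import numFieldNormedType.Exports.
Local Open Scope classical_set_scope.
Local Open Scope ring_scope.

Section Aux.
Variables (R : realType) (d : nat).
Notation V := 'rV[R]_d.

Lemma closure_rV (A : set V) z : closure A z ->
  forall e, 0 < e -> exists v, A v /\ `|z - v| < e.
Proof.
move=> cl e e0; have [v [Av bv]] := cl _ (nbhsx_ballx z e e0).
by exists v; split => //; move: bv; rewrite -ball_normE.
Qed.

Lemma closed_rV (A : set V) :
  (forall z, (forall e, 0 < e -> exists v, A v /\ `|z - v| < e) -> A z) -> closed A.
Proof. by move=> H z /closure_rV; apply: H. Qed.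

Lemma closure_pair (G : set (V * V)) p : closure G p ->
  forall e, 0 < e -> exists q, G q /\ `|p.1 - q.1| < e /\ `|p.2 - q.2| < e.
Proof.
move=> cl e e0; have [q [Gq [b1 b2]]] := cl _ (nbhsx_ballx p e e0).
by exists q; split => //; move: b1 b2; rewrite -!ball_normE.
Qed.
End Aux.

Section H.
Variables (R : realType) (d : nat) (S : Type) (h : 'rV[R]_d -> S -> 'rV[R]_d) (L : R).
Hypothesis L0 : 0 < L.
Hypothesis hL : forall (x1 x2 : 'rV[R]_d) (y : S), `|h x1 y - h x2 y| <= L * `|x1 - x2|.

Lemma lip_c c x1 x2 y : 0 < c ->
  `|hscale h c x1 y - hscale h c x2 y| <= L * `|x1 - x2|.
Proof.
move=> c0; have c0' : 0 <= c := ltW c0; have ci0 : 0 <= c^-1 by rewrite invr_ge0.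
 rewrite /hscale -scalerBr normrZ ger0_norm //.
have := hL (c *: x1) (c *: x2) y; rewrite -scalerBr normrZ ger0_norm // => H.
have -> : L * `|x1 - x2| = c^-1 * (L * (c * `|x1 - x2|)).
  by field; rewrite gt_eqF.
by rewrite ler_wpM2l.
Qed.

Lemma bound_c c x y : 0 < c ->
  `|hscale h c x y| <= c^-1 * `|h 0 y| + L * `|x|.
Proof.
move=> c0; have c0' : 0 <= c := ltW c0; have ci0 : 0 <= c^-1 by rewrite invr_ge0.
 have := hL (c *: x) 0 y; rewrite subr0 normrZ ger0_norm // => H.
rewrite /hscale normrZ ger0_norm //.
have H2 : `|h (c *: x) y| <= `|h 0 y| + L * (c * `|x|).
  rewrite -[h (c *: x) y](subrK (h 0 y)); apply: le_trans (ler_normD _ _) _.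
  by rewrite addrC lerD2l.
have -> : c^-1 * `|h 0 y| + L * `|x| = c^-1 * (`|h 0 y| + L * (c * `|x|)).
  by field; rewrite gt_eqF.
by rewrite ler_wpM2l.
Qed.

Lemma hinf_bound x y u : h_infty h x y u -> `|u| <= L * `|x|.
Proof.
move=> hu; apply/ler_addgt0Pr => e e0.
have e20 : 0 < e / 2 by rewrite divr_gt0.
have [c [c1 [Mc hc]]] := hu (e / 2) (`|h 0 y| / (e / 2)) e20.
have c0 : 0 < c by apply: lt_le_trans c1.
have B := @bound_c c x y c0.
have C : c^-1 * `|h 0 y| <= e / 2.
  have : `|h 0 y| <= c * (e / 2).
    by rewrite -ler_pdivrMr.
  move=> H; rewrite -(ler_pM2l c0) mulrA mulfV ?gt_eqF // mul1r.
  exact: H.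
have T : `|u| <= `|hscale h c x y| + `|hscale h c x y - u|.
  rewrite -[u in `|u|](subKr (hscale h c x y)) (le_trans (ler_normB _ _)) //.
lra.
Qed.

Lemma ball_compact (r : R) : compact [set v : 'rV[R]_d | `|v| <= r].
Proof.
apply: bounded_closed_compact.
  exists r; split; first by rewrite num_real.
  by move=> M rM v /= vr; rewrite (le_trans vr) // ltW.
apply: closed_rV => z Hz; apply/ler_addgt0Pr => e e0.
have [v [vr zv]] := Hz e e0.
rewrite -[z](subrK v) (le_trans (ler_normD _ _)) //.
have : `|v| <= r := vr. move=> vr'; lra.
Qed.

Lemma hinf_shift x x' y u (B : set 'rV[R]_d) :
  (forall v, h_infty h x y v -> B v) -> h_infty h x' y u ->
  forall e, 0 < e -> exists b, B b /\ `|u - b| < L * `|x' - x| + e.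
Proof.
move=> AB hu e e0.
pose E (i : R * R) := [set c : R | 1 <= c /\ i.1 <= c /\ `|hscale h c x' y - u| < i.2].
pose D (i : R * R) := (fun c => hscale h c x y) @` E i.
pose I := [set i : R * R | 0 < i.2].
pose F := filter_from I D.
have FF : ProperFilter F.
  apply: filter_from_proper.
    apply: filter_from_filter; first by exists (0, 1); rewrite /I /= ltr01.
    move=> i j Ii Ij; exists (Num.max i.1 j.1, Num.min i.2 j.2).
      by rewrite /I /= lt_min Ii Ij.
    move=> w [c [c1 [Mc hc]] <-]; move: Mc hc; rewrite /= ge_max lt_min.
    move=> /andP[? ?] /andP[? ?].
    by split; exists c.
  move=> i Ii; have [c [c1 [Mc hc]]] := hu i.2 i.1 Ii.
  by exists (hscale h c x y); exists c.
have FK : F [set v : 'rV[R]_d | `|v| <= `|h 0 y| + L * `|x|].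
  exists (0, 1); first by rewrite /I /= ltr01.
  move=> w [c [c1 _] <-] /=.
  have c0 : 0 < c by apply: lt_le_trans c1.
  apply: (le_trans (@bound_c c x y c0)); rewrite lerD2r.
  apply: ler_piMl => //; rewrite invr_le1 // ?unitfE ?gt_eqF //.
have [v [_ clv]] := @ball_compact _ F FF FK.
have hv : h_infty h x y v.
  move=> eps M eps0.
  have FD : F (D (M, 1)) by exists (M, 1) => //; rewrite /I /= ltr01.
  have [w [[c [c1 [Mc _]] <-] bw]] := clv _ _ FD (nbhsx_ballx v eps eps0).
  exists c; split => //; split => //.
  by move: bw; rewrite -ball_normE /= distrC.
exists v; split; first exact: AB.
have e20 : 0 < e / 2 by rewrite divr_gt0.
have FD : F (D (0, e / 2)) by exists (0, e / 2).
have [w [[c [c1 [_ hc]] <-] bw]] := clv _ _ FD (nbhsx_ballx v _ e20).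
move: bw; rewrite -ball_normE /= => bw.
have c0 : 0 < c by apply: lt_le_trans c1.
have lc := @lip_c c x' x y c0.
have T1 := ler_distD (hscale h c x' y) u v.
have T2 := ler_distD (hscale h c x y) (hscale h c x' y) v.
rewrite [`|v - _|]distrC in bw; rewrite distrC /= in hc.
lra.
Qed.
End H.

Section M.
Variables (R : realType) (d : nat).
Notation V := 'rV[R]_d.

Lemma closed_approx (A : set V) z : closed A ->
  (forall e, 0 < e -> exists v, A v /\ `|z - v| < e) -> A z.
Proof.
move=> cA H; apply: cA => N /nbhs_ballP [e /= e0 sub].
have [v [Av zv]] := H e e0; exists v; split => //; apply: sub.
by rewrite -ball_normE.
Qed.

Lemma conv_comb_norm (z1 z2 b1 b2 : V) (t : R) : 0 <= t -> t <= 1 ->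
  `|t *: z1 + (1 - t) *: z2 - (t *: b1 + (1 - t) *: b2)| <=
  t * `|z1 - b1| + (1 - t) * `|z2 - b2|.
Proof.
move=> t0 t1.
have -> : t *: z1 + (1 - t) *: z2 - (t *: b1 + (1 - t) *: b2) =
  t *: (z1 - b1) + (1 - t) *: (z2 - b2) by rewrite !scalerBr opprD addrACA.
apply: le_trans (ler_normD _ _) _; rewrite !normrZ !ger0_norm //.
by rewrite subr_ge0.
Qed.

Definition thick (B : set V) (del : R) :=
  [set z | forall e, 0 < e -> exists b, B b /\ `|z - b| <= del + e].

Lemma thick_closed B del : closed (thick B del).
Proof.
apply: closed_rV => z Hz e e0.
have e20 : 0 < e / 2 by rewrite divr_gt0.
have [v [Dv zv]] := Hz _ e20; have [b [Bb vb]] := Dv _ e20.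
exists b; split => //.
have T := ler_distD v z b; lra.
Qed.

Lemma thick_convex B del : convex_rV B -> convex_rV (thick B del).
Proof.
move=> cB z1 z2 t D1 D2 t0 t1 e e0.
have [b1 [B1 h1]] := D1 e e0; have [b2 [B2 h2]] := D2 e e0.
exists (t *: b1 + (1 - t) *: b2); split; first exact: cB.
apply: (le_trans (conv_comb_norm _ _ _ _ _ t0 t1)).
have : 0 <= 1 - t by rewrite subr_ge0.
nra.
Qed.

Lemma ball_convex r : convex_rV [set v : V | `|v| <= r].
Proof.
move=> z1 z2 t /= h1 h2 t0 t1.
have := conv_comb_norm z1 z2 0 0 t t0 t1; rewrite !subr0 !scaler0 addr0 subr0.
have : 0 <= 1 - t by rewrite subr_ge0.
nra.
Qed.

Lemma ball_closed r : closed [set v : V | `|v| <= r].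
Proof.
apply: closed_rV => z Hz; apply/ler_addgt0Pr => e e0.
have [v [vr zv]] := Hz e e0.
rewrite -[z](subrK v) (le_trans (ler_normD _ _)) //.
have : `|v| <= r := vr. move=> vr'; lra.
Qed.

End M.

Theorem lemma2 (R : realType) (d : nat) (S : pseudoMetricType R)
  (h : 'rV[R]_d -> S -> 'rV[R]_d) :
  hausdorff_space S ->
  compact [set: S] ->
  continuous (fun p : 'rV[R]_d * S => h p.1 p.2) ->
  (exists L : R, 0 < L /\
     forall (x1 x2 : 'rV[R]_d) (y : S), `|h x1 y - h x2 y| <= L * `|x1 - x2|) ->
  (* (S1) *)
  (forall (c : nat -> R) (yn : nat -> S) (y : S) (x u : 'rV[R]_d),
     (forall n, 1 <= c n) ->
     (forall n, c n < c n.+1) ->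
     c @ \oo --> +oo ->
     yn @ \oo --> y ->
     (fun n => hscale h (c n) x (yn n)) @ \oo --> u ->
     h_infty h x y u) ->
  Marchaud (Hmap h).
Proof.
move=> _ _ _ [L [L0 hL]] _.
have Hsub : forall x (B : set 'rV[R]_d), closed B -> convex_rV B ->
    (forall y v, h_infty h x y v -> B v) -> Hmap h x `<=` B.
  move=> x B cB vB AB w Hw; apply: Hw; split => //; split => //.
  by move=> v [y _ hv]; exact: AB hv.
have Hcl : forall x, closed (Hmap h x).
  by move=> x; apply: closed_bigI => B [].
have Hcv : forall x, convex_rV (Hmap h x).
  move=> x z1 z2 t H1 H2 t0 t1 B PB; case: (PB) => _ [cB _].
  exact: cB (H1 _ PB) (H2 _ PB) t0 t1.
have Hball : forall x, Hmap h x `<=` [set v | `|v| <= L * `|x|].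
  move=> x; apply: Hsub; [exact: ball_closed | exact: ball_convex |].
  move=> y v hv.
  rewrite /=; exact: (@hinf_bound R d S h L hL x y v hv).
split.
- move=> x; split; first exact: Hcv.
  exact: subclosed_compact (Hcl x) (@ball_compact R d _) (Hball x).
- exists (L + 1); split; first lra.
  move=> x; apply: (@le_lt_trans _ _ (L * `|x|)%:E).
    apply: ge_ereal_sup => _ [w Hw <-]; rewrite lee_fin; exact: Hball Hw.
  rewrite lte_fin; have := normr_ge0 x; nra.
- move=> p clp; rewrite /=; set x := p.1; set w := p.2.
  move=> B PB; case: (PB) => cB [vB AB].
  apply: closed_approx => // eps eps0.
  pose eta := eps / (L + 3).
  have eta0 : 0 < eta by rewrite divr_gt0 //; lra.
  have [q [Gq [qx qw]]] := @closure_pair _ _ _ _ clp _ eta0.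
  pose D := @thick R d B (L * `|q.1 - x|).
  have Dq : D q.2.
    apply: (Hsub q.1 D (@thick_closed R d B _) (@thick_convex R d B _ vB)) => //.
    move=> y v hv e e0.
    have AB' : forall v, h_infty h x y v -> B v.
      by move=> v' hv'; apply: AB; exists y.
    have := @hinf_shift _ _ _ _ _ hL _ _ _ _ _ AB' hv _ e0.
    move=> [b [Bb hb]].
    by exists b; split => //; apply: ltW.
  have [b [Bb hb]] := Dq eta eta0.
  exists b; split => //.
  have T := ler_distD q.2 w b.
  have Ex : eps = eta * (L + 3) by rewrite /eta mulfVK // gt_eqF //; lra.
  rewrite distrC in qx.
  have : L * `|q.1 - x| <= L * eta by rewrite ler_pM2l // ltW.
  lra.
Qed.
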